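(* Let $\mathbf{M}=(c_{i,j})_{i,j\ge0}$ be a positive definite moment matrix, i.e. $c_{i,j}=\int z^i\bar z^j d\mu$ for some positive Borel measure $\mu$ on $\mathbb{C}$ with infinite support and finite moments, and let $\widehat{\mathbf{M}}=(c_{i+1,j+1})_{i,j\ge0}$ be the matrix obtained by removing the first row and first column of $\mathbf{M}$. Then $$\beta(\widehat{\mathbf{M}},\mathbf{M})=\lim_{n\to\infty} c_{n,n}^{1/n}.$$
   Context: For infinite Hermitian positive semidefinite matrices $\mathbf{A},\mathbf{B}$ with $\mathbf{B}$ positive definite, $\beta(\mathbf{A},\mathbf{B})=\sup\{v\mathbf{A}v^*/v\mathbf{B}v^*: v\in c_{00}\setminus\{0\}\}\in(-\infty,\infty]$, equivalently the limit as $n\to\infty$ of the largest generalized eigenvalue of the $(n+1)\times(n+1)$ truncation $\mathbf{A}_n$ with respect to $\mathbf{B}_n$; $c_{00}$ is the space of finitely supported complex row sequences. *)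

(* Defs.v *)
From HB Require Import structures.
From mathcomp Require Import all_boot all_order all_algebra.
From mathcomp Require Import all_classical all_reals all_analysis.
From mathcomp Require Import complex.
Set Implicit Arguments. Unset Strict Implicit. Unset Printing Implicit Defensive.
Import Order.TTheory GRing.Theory Num.Theory.
Import numFieldNormedType.Exports.
Local Open Scope classical_set_scope.
Local Open Scope ring_scope.

(* The complex plane C is modelled as R * R (Borel sigma-algebra of R^2 =
   product of the Borel sigma-algebras), the point p being p.1 + i p.2. *)
Definition zc {R : realType} (p : R * R) : R[i] := Complex p.1 p.2.

Definition modz {R : realType} (p : R * R) : R := Num.sqrt (p.1 ^+ 2 + p.2 ^+ 2).

Definition msupport {R : realType}
  (mu : {measure set (R * R) -> \bar R}) : set (R * R) :=
  [set p | forall e : R, 0 < e -> (0 < mu (ball p e))%E].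

Definition finite_moments {R : realType}
  (mu : {measure set (R * R) -> \bar R}) : Prop :=
  forall k : nat, mu.-integrable setT (fun p => ((modz p) ^+ k)%:E).

(* c_{i,j} = int z^i conj(z)^j dmu, as the complex number whose real and
   imaginary parts are the integrals of the real and imaginary parts *)
Definition moment {R : realType}
  (mu : {measure set (R * R) -> \bar R}) (i j : nat) : R[i] :=
  Complex (Rintegral mu setT (fun p => complex.Re (zc p ^+ i * conjc (zc p ^+ j))))
          (Rintegral mu setT (fun p => complex.Im (zc p ^+ i * conjc (zc p ^+ j)))).

Definition infmx (R : realType) := nat -> nat -> R[i].

Definition moment_matrix {R : realType}
  (mu : {measure set (R * R) -> \bar R}) : infmx R := moment mu.

Definition shift_mx {R : realType} (A : infmx R) : infmx R :=
  fun i j => A i.+1 j.+1.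

(* v A v^* for v supported in [0, N) *)
Definition qform {R : realType} (A : infmx R) (v : nat -> R[i]) (N : nat) : R[i] :=
  \sum_(i < N) \sum_(j < N) v i * A i j * conjc (v j).

(* beta(A,B) = sup { vAv^*/vBv^* : v in c00, v <> 0 } (as an extended real) *)
Definition beta {R : realType} (A B : infmx R) : \bar R :=
  ereal_sup [set r : \bar R | exists (N : nat) (v : nat -> R[i]),
     (forall i, (N <= i)%N -> v i = 0) /\ (exists i, v i != 0) /\
     r = ((complex.Re (qform A v N)) / (complex.Re (qform B v N)))%:E].

(* Main.v *)
Require Import Defs.
From HB Require Import structures.
From mathcomp Require Import all_boot all_order all_algebra.
From mathcomp Require Import all_classical all_reals all_analysis.
From mathcomp Require Import complex.
From mathcomp Require Import ring lra.
From mathcomp Require Import measurable_realfun.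
Import Order.TTheory GRing.Theory Num.Theory.
Import numFieldNormedType.Exports.
Local Open Scope classical_set_scope.
Local Open Scope ring_scope.
Section Alg.
Variable R : realType.
Implicit Types p : R * R.

Definition ww p : R := p.1 ^+ 2 + p.2 ^+ 2.
Definition ff (i j : nat) p : R[i] := zc p ^+ i * conjc (zc p ^+ j).
Definition nc (u : R[i]) : R := complex.Re u ^+ 2 + complex.Im u ^+ 2.

Lemma zcJ p : zc p * conjc (zc p) = ((ww p)%:C)%C.
Proof. case: p => a b; rewrite /zc /ww /=; congr (Complex _ _); ring. Qed.

Lemma ffS i j p : ff i.+1 j.+1 p = ((ww p)%:C)%C * ff i j p.
Proof. by rewrite /ff !exprS rmorphM -zcJ; ring. Qed.

Lemma ReC x (u : R[i]) : complex.Re ((x%:C)%C * u) = x * complex.Re u.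
Proof. case: u => a b /=; ring. Qed.

Lemma ImC x (u : R[i]) : complex.Im ((x%:C)%C * u) = x * complex.Im u.
Proof. case: u => a b /=; ring. Qed.

Lemma Re_ffkk k p : complex.Re (ff k k p) = ww p ^+ k.
Proof.
elim: k => [|k IH]; first by rewrite /ff !expr0 rmorph1 mulr1.
by rewrite ffS ReC IH exprS.
Qed.

Lemma ncM u v : nc (u * v) = nc u * nc v.
Proof. case: u => a b; case: v => c d; rewrite /nc /=; ring. Qed.

Lemma ncX u n : nc (u ^+ n) = nc u ^+ n.
Proof.
elim: n => [|n IH]; first by rewrite !expr0 /nc /=; ring.
by rewrite !exprS ncM IH.
Qed.

Lemma nc_ff i j p : nc (ff i j p) = ww p ^+ (i + j).
Proof.
rewrite /ff ncM rmorphXn !ncX exprD; congr (_ ^+ _ * _ ^+ _);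
  case: p => a b; rewrite /nc /ww /=; ring.
Qed.

Lemma ww_ge0 p : 0 <= ww p.
Proof. by rewrite /ww addr_ge0 // sqr_ge0. Qed.

Lemma abs_le_nc (x y : R) : `|x| <= Num.sqrt (x ^+ 2 + y ^+ 2).
Proof.
rewrite -sqrtr_sqr ler_sqrt ?addr_ge0 ?sqr_ge0 //.
by rewrite lerDl sqr_ge0.
Qed.

Lemma sqrtrXn (x : R) k : 0 <= x -> Num.sqrt (x ^+ k) = Num.sqrt x ^+ k.
Proof.
move=> x0; elim: k => [|k IH]; first by rewrite !expr0 sqrtr1.
by rewrite !exprS sqrtrM // IH.
Qed.

Lemma Re_ff_le i j p : `|complex.Re (ff i j p)| <= Defs.modz p ^+ (i + j).
Proof.
have -> : Defs.modz p ^+ (i + j) = Num.sqrt (nc (ff i j p)).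
  by rewrite nc_ff /Defs.modz sqrtrXn // ww_ge0.
exact: abs_le_nc.
Qed.

Lemma Im_ff_le i j p : `|complex.Im (ff i j p)| <= Defs.modz p ^+ (i + j).
Proof.
have -> : Defs.modz p ^+ (i + j) = Num.sqrt (nc (ff i j p)).
  by rewrite nc_ff /Defs.modz sqrtrXn // ww_ge0.
by rewrite /nc addrC; exact: abs_le_nc.
Qed.

End Alg.
Section Meas.
Variable R : realType.
Notation mRe u := (measurable_fun setT (fun p : R * R => complex.Re (u p))).
Notation mIm u := (measurable_fun setT (fun p : R * R => complex.Im (u p))).

Lemma meas_mul (u v : R * R -> R[i]) : mRe u -> mIm u -> mRe v -> mIm v ->
  mRe (fun p => u p * v p) /\ mIm (fun p => u p * v p).
Proof.
move=> ur ui vr vi; split.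
- have -> : (fun p => complex.Re (u p * v p)) =
     ((fun p => complex.Re (u p)) \* (fun p => complex.Re (v p))) \-
     ((fun p => complex.Im (u p)) \* (fun p => complex.Im (v p))).
    by apply/funext => p /=; case: (u p) => a b; case: (v p).
  by apply: measurable_realfun.measurable_funB; apply: measurable_realfun.measurable_funM.
- have -> : (fun p => complex.Im (u p * v p)) =
     ((fun p => complex.Re (u p)) \* (fun p => complex.Im (v p))) \+
     ((fun p => complex.Im (u p)) \* (fun p => complex.Re (v p))).
    by apply/funext => p /=; case: (u p) => a b; case: (v p).
  by apply: measurable_realfun.measurable_funD; apply: measurable_realfun.measurable_funM.
Qed.

Lemma meas_pow (u : R * R -> R[i]) n : mRe u -> mIm u ->
  mRe (fun p => u p ^+ n) /\ mIm (fun p => u p ^+ n).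
Proof.
move=> ur ui; elim: n => [|n [IHr IHi]].
  by split; [rewrite /= (_ : (fun _ => _) = cst 1) //|
             rewrite /= (_ : (fun _ => _) = cst 0) //].
have [h1 h2] := @meas_mul _ _ ur ui IHr IHi.
by split; [apply: eq_measurable_fun h1|apply: eq_measurable_fun h2] => p _;
  rewrite exprS.
Qed.

Lemma meas_ff i j : mRe (@ff R i j) /\ mIm (@ff R i j).
Proof.
have zr : mRe (@zc R) by exact: measurable_fst.
have zi : mIm (@zc R) by exact: measurable_snd.
have cr : mRe (fun p => conjc (@zc R p)) by exact: measurable_fst.
have ci : mIm (fun p => conjc (@zc R p)).
  by apply: (measurable_realfun.measurable_funN (f := snd)); exact: measurable_snd.
have [a1 a2] := @meas_pow _ i zr zi.
have [b1 b2] := @meas_pow _ j cr ci.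
have [h1 h2] := @meas_mul _ _ a1 a2 b1 b2.
by split; [apply: eq_measurable_fun h1|apply: eq_measurable_fun h2] => p _;
  rewrite /ff rmorphXn.
Qed.

End Meas.
Section Integ.
Variable R : realType.
Variable mu : {measure set (R * R) -> \bar R}.
Notation Int h := (mu.-integrable setT (EFin \o h)).

Lemma ReD (x y : R[i]) : complex.Re (x + y) = complex.Re x + complex.Re y.
Proof. by case: x; case: y. Qed.

Lemma Re_sum I (s : seq I) (F : I -> R[i]) :
  complex.Re (\sum_(i <- s) F i) = \sum_(i <- s) complex.Re (F i).
Proof. by apply: (big_morph _ ReD). Qed.

Lemma Rint_sum I (s : seq I) (h : I -> R * R -> R) : (forall i, Int (h i)) ->
  Int (fun p => \sum_(i <- s) h i p) /\
  Rintegral mu setT (fun p => \sum_(i <- s) h i p) =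
    \sum_(i <- s) Rintegral mu setT (h i).
Proof.
move=> hi; elim: s => [|a s [IH1 IH2]].
  rewrite big_nil; split.
    apply: (eq_integrable measurableT (cst 0%E)); last exact: integrable0.
    by move=> p _ /=; rewrite big_nil.
  rewrite (_ : (fun p => _) = fun=> 0); last by apply/funext => p; rewrite big_nil.
  by rewrite /Rintegral integral0.
split.
  apply: (eq_integrable measurableT ((EFin \o h a) \+ (EFin \o (fun p => (\sum_(i <- s) h i p)%R)))%E).
    by move=> p _ /=; rewrite big_cons.
  exact: integrableD.
rewrite big_cons -IH2 -RintegralD //.
by apply: eq_Rintegral => p _; rewrite big_cons.
Qed.

Lemma ReM (a u : R[i]) : complex.Re (a * u) =
  complex.Re a * complex.Re u - complex.Im a * complex.Im u.
Proof. by case: a; case: u. Qed.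

Lemma Rint_term (a : R[i]) (g : R * R -> R[i]) :
  Int (fun p => complex.Re (g p)) -> Int (fun p => complex.Im (g p)) ->
  Int (fun p => complex.Re (a * g p)) /\
  complex.Re (a * Complex (Rintegral mu setT (fun p => complex.Re (g p)))
                          (Rintegral mu setT (fun p => complex.Im (g p)))) =
  Rintegral mu setT (fun p => complex.Re (a * g p)).
Proof.
move=> gr gi.
have i1 : Int (fun p => complex.Re a * complex.Re (g p)).
  apply: (eq_integrable measurableT (fun p => (complex.Re a)%:E * (complex.Re (g p))%:E)%E).
    by move=> p _.
  exact: integrableZl.
have i2 : Int (fun p => complex.Im a * complex.Im (g p)).
  apply: (eq_integrable measurableT (fun p => (complex.Im a)%:E * (complex.Im (g p))%:E)%E).
    by move=> p _.
  exact: integrableZl.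
split.
  apply: (eq_integrable measurableT ((EFin \o (fun p => (complex.Re a * complex.Re (g p))%R)) \-
     (EFin \o (fun p => (complex.Im a * complex.Im (g p))%R)))%E).
    by move=> p _ /=; rewrite ReM EFinB.
  exact: integrableB.
have -> : Rintegral mu setT (fun p => complex.Re (a * g p)) =
   Rintegral mu setT (fun p => complex.Re a * complex.Re (g p) -
            complex.Im a * complex.Im (g p)).
  by apply: eq_Rintegral => p _; rewrite ReM.
by rewrite RintegralB // !RintegralZl // ReM.
Qed.

Definition Mof (g : nat -> nat -> R * R -> R[i]) : infmx R := fun i j =>
  Complex (Rintegral mu setT (fun p => complex.Re (g i j p)))
          (Rintegral mu setT (fun p => complex.Im (g i j p))).

Lemma ReQ (g : nat -> nat -> R * R -> R[i]) v N :
  (forall i j, Int (fun p => complex.Re (g i j p))) ->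
  (forall i j, Int (fun p => complex.Im (g i j p))) ->
  complex.Re (qform (Mof g) v N) =
  Rintegral mu setT (fun p => complex.Re
     (\sum_(i < N) \sum_(j < N) v i * g i j p * conjc (v j))).
Proof.
move=> gr gi.
have T ij : Int (fun p => complex.Re ((v ij.1 * conjc (v ij.2)) * g ij.1 ij.2 p)) /\
  complex.Re (v ij.1 * Mof g ij.1 ij.2 * conjc (v ij.2)) =
  Rintegral mu setT (fun p => complex.Re ((v ij.1 * conjc (v ij.2)) * g ij.1 ij.2 p)).
  have [h1 h2] := Rint_term (v ij.1 * conjc (v ij.2)) _ (gr ij.1 ij.2) (gi ij.1 ij.2).
  by split => //; rewrite -h2 /Mof; congr complex.Re; ring.
have T2 (i : 'I_N) : Int (fun p => \sum_(j < N) complex.Re ((v i * conjc (v j)) * g i j p)) /\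
   Rintegral mu setT (fun p => \sum_(j < N) complex.Re ((v i * conjc (v j)) * g i j p)) =
   \sum_(j < N) Rintegral mu setT (fun p => complex.Re ((v i * conjc (v j)) * g i j p)).
  have X := (Rint_sum _ (index_enum 'I_N) (fun (j : 'I_N) p => complex.Re ((v i * conjc (v j)) * g i j p))
     (fun j => (T (nat_of_ord i, nat_of_ord j)).1)).
  exact X.
have [_ T3] := Rint_sum _ (index_enum _) (fun (i : 'I_N) p => \sum_(j < N) complex.Re ((v i * conjc (v j)) * g i j p))
     (fun i => (T2 i).1).
rewrite /qform Re_sum.
under eq_bigr do rewrite Re_sum.
under eq_bigr do under eq_bigr do rewrite (T (nat_of_ord _, nat_of_ord _)).2 /=.
under eq_bigr do rewrite -(T2 _).2.
rewrite -T3; apply: eq_Rintegral => p _.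
rewrite Re_sum; apply: eq_bigr => i _; rewrite Re_sum; apply: eq_bigr => j _.
by congr complex.Re; ring.
Qed.

Lemma IntQ (g : nat -> nat -> R * R -> R[i]) (v : nat -> R[i]) (N : nat) :
  (forall i j, Int (fun p => complex.Re (g i j p))) ->
  (forall i j, Int (fun p => complex.Im (g i j p))) ->
  Int (fun p => complex.Re
     (\sum_(i < N) \sum_(j < N) v i * g i j p * conjc (v j))).
Proof.
move=> gr gi.
have T ij : Int (fun p => complex.Re ((v ij.1 * conjc (v ij.2)) * g ij.1 ij.2 p)).
  exact: (Rint_term (v ij.1 * conjc (v ij.2)) _ (gr ij.1 ij.2) (gi ij.1 ij.2)).1.
have T2 (i : 'I_N) : Int (fun p => \sum_(j < N) complex.Re ((v i * conjc (v j)) * g i j p)).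
  exact: (Rint_sum _ (index_enum 'I_N) (fun (j : 'I_N) p => complex.Re ((v i * conjc (v j)) * g i j p))
     (fun j => (T (nat_of_ord i, nat_of_ord j)))).1.
have [T3 _] := Rint_sum _ (index_enum _) (fun (i : 'I_N) p => \sum_(j < N) complex.Re ((v i * conjc (v j)) * g i j p))
     T2.
move: T3; apply: eq_integrable => // p _ /=.
rewrite Re_sum; congr EFin; apply: eq_bigr => i _; rewrite Re_sum; apply: eq_bigr => j _.
by congr complex.Re; ring.
Qed.

End Integ.
Section Main.
Variable R : realType.
Variable mu : {measure set (R * R) -> \bar R}.
Hypothesis hmom : finite_moments mu.
Notation Int h := (mu.-integrable setT (EFin \o h)).

Lemma int_Re_ff i j : Int (fun p => complex.Re (@ff R i j p)).
Proof.
apply: (le_integrable measurableT _ _ (hmom (i + j))).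
  by apply/measurable_EFinP; exact: (@meas_ff R i j).1.
move=> p _ /=; rewrite lee_fin (ger0_norm (x := Defs.modz p ^+ _)).
  exact: Re_ff_le.
by rewrite exprn_ge0 // sqrtr_ge0.
Qed.

Lemma int_Im_ff i j : Int (fun p => complex.Im (@ff R i j p)).
Proof.
apply: (le_integrable measurableT _ _ (hmom (i + j))).
  by apply/measurable_EFinP; exact: (@meas_ff R i j).2.
move=> p _ /=; rewrite lee_fin (ger0_norm (x := Defs.modz p ^+ _)).
  exact: Im_ff_le.
by rewrite exprn_ge0 // sqrtr_ge0.
Qed.

Lemma mu_fin : mu setT \is a fin_num.
Proof.
have := hmom 0; move/integrable_fin_num => /(_ measurableT).
rewrite (_ : (fun p => _) = cst 1%E); last by apply/funext => p; rewrite expr0.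
by rewrite integral_cst // mul1e.
Qed.

Lemma mu_finA (A : set (R * R)) : measurable A -> mu A \is a fin_num.
Proof.
move=> mA; rewrite ge0_fin_numE //; apply: (le_lt_trans (le_measure _ _ _ (subsetT A))).
- by rewrite inE.
- by rewrite inE.
by rewrite -ge0_fin_numE // mu_fin.
Qed.

Lemma meas_ww : measurable_fun setT (@ww R).
Proof.
apply: measurable_realfun.measurable_funD; apply: measurable_funX.
  exact: measurable_fst.
exact: measurable_snd.
Qed.

Definition AA (t : R) : set (R * R) := (@ww R) @^-1` `]t, +oo[%classic.

Lemma AAE t p : AA t p = (t < @ww R p).
Proof. by rewrite /AA /= in_itv /= andbT. Qed.

Lemma meas_AA t : measurable (AA t).
Proof. by rewrite -(setTI (AA t)); apply: meas_ww => //; exact: measurable_itv. Qed.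

End Main.
Arguments Mof {R} mu g.
Arguments ReQ {R mu} g v N.
Arguments IntQ {R mu} g v N.
Arguments int_Re_ff {R mu} hmom i j.
Arguments int_Im_ff {R mu} hmom i j.
Arguments AA {R} t.
Arguments AAE {R} t p.
Arguments meas_AA {R} t.
Arguments mu_finA {R mu} hmom A.
Arguments mu_fin {R mu} hmom.
Section Keys.
Variable R : realType.
Variable mu : {measure set (R * R) -> \bar R}.
Hypothesis hmom : finite_moments mu.
Notation Int h := (mu.-integrable setT (EFin \o h)).
Notation FF v N p := (complex.Re (\sum_(i < N) \sum_(j < N) v i * @ff R i j p * conjc (v j))).
Notation GG v N p := (complex.Re (\sum_(i < N) \sum_(j < N) v i * @ff R i.+1 j.+1 p * conjc (v j))).

Lemma Fpos (v : nat -> R[i]) N p : 0 <= FF v N p.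
Proof.
have -> : \sum_(i < N) \sum_(j < N) v i * @ff R i j p * conjc (v j) =
   (\sum_(i < N) v i * zc p ^+ i) * conjc (\sum_(j < N) v j * zc p ^+ j).
  rewrite rmorph_sum mulr_suml; apply: eq_bigr => i _.
  rewrite mulr_sumr; apply: eq_bigr => j _; rewrite /ff rmorphM; ring.
by have := mulcJ_ge0 (\sum_(i < N) v i * zc p ^+ i); rewrite lecE => /andP[_].
Qed.

Lemma GwF (v : nat -> R[i]) N p : GG v N p = @ww R p * FF v N p.
Proof.
rewrite -ReC; congr complex.Re; rewrite mulr_sumr; apply: eq_bigr => i _.
by rewrite mulr_sumr; apply: eq_bigr => j _; rewrite ffS; ring.
Qed.

Lemma MofE : moment_matrix mu = Mof mu (@ff R).
Proof. by []. Qed.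

Lemma shiftE : shift_mx (moment_matrix mu) = Mof mu (fun i j => @ff R i.+1 j.+1).
Proof. by []. Qed.

Lemma IntF (v : nat -> R[i]) N : Int (fun p => FF v N p).
Proof. by apply: IntQ => i j; [exact: int_Re_ff hmom i j|exact: int_Im_ff hmom i j]. Qed.

Lemma IntG (v : nat -> R[i]) N : Int (fun p => GG v N p).
Proof.
by apply: (IntQ (fun i j => @ff R i.+1 j.+1)) => i j;
  [exact: int_Re_ff hmom i.+1 j.+1|exact: int_Im_ff hmom i.+1 j.+1].
Qed.

Lemma ReQF (v : nat -> R[i]) N :
  complex.Re (qform (moment_matrix mu) v N) = Rintegral mu setT (fun p => FF v N p).
Proof. by rewrite MofE ReQ // => i j; [exact: int_Re_ff hmom i j|exact: int_Im_ff hmom i j]. Qed.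

Lemma ReQG (v : nat -> R[i]) N :
  complex.Re (qform (shift_mx (moment_matrix mu)) v N) = Rintegral mu setT (fun p => GG v N p).
Proof.
by rewrite shiftE (ReQ (fun i j => @ff R i.+1 j.+1)) // => i j;
  [exact: int_Re_ff hmom i.+1 j.+1|exact: int_Im_ff hmom i.+1 j.+1].
Qed.

Lemma key_up t (v : nat -> R[i]) N : 0 <= t -> mu (AA t) = 0 ->
  complex.Re (qform (shift_mx (moment_matrix mu)) v N) <=
  t * complex.Re (qform (moment_matrix mu) v N).
Proof.
move=> t0 muA.
have iF := IntF v N; have iG := IntG v N.
have itF : Int (fun p => t * FF v N p).
  apply: (eq_integrable measurableT (fun p => t%:E * (FF v N p)%:E)%E) => //.
  exact: integrableZl.
rewrite ReQF ReQG -RintegralZl //; apply: fine_le.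
- exact: integrable_fin_num.
- exact: integrable_fin_num.
apply: ae_ge0_le_integral => //.
- by move=> p _; rewrite lee_fin GwF mulr_ge0 // ?ww_ge0 // Fpos.
- exact: measurable_int iG.
- by move=> p _; rewrite lee_fin mulr_ge0 // Fpos.
- exact: measurable_int itF.
exists (AA t); split => //; first exact: meas_AA.
move=> p /=; rewrite AAE; apply: contra_notP => /negP; rewrite -leNgt => wt _.
by rewrite lee_fin GwF ler_wpM2r // Fpos.
Qed.

Lemma qform_delta (A : infmx R) k : qform A (fun i => (i == k)%:R) k.+1 = A k k.
Proof.
rewrite /qform (bigD1 ord_max) //= (bigD1 ord_max) //= eqxx.
rewrite big1 ?addr0; last first.
  move=> j; rewrite -val_eqE /= => /negbTE ->; by rewrite rmorph0 mulr0.
rewrite big1 ?addr0; last first.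
  move=> i; rewrite -val_eqE /= => /negbTE ->; rewrite big1 // => j _.
  by rewrite !mul0r.
rewrite /= mul1r; case: (A k k) => a b /=; congr (Complex _ _); ring.
Qed.

Lemma key_ratio t : 0 <= t -> mu (AA t) = 0 ->
  (beta (shift_mx (moment_matrix mu)) (moment_matrix mu) <= t%:E)%E.
Proof.
move=> t0 muA; apply: ge_ereal_sup => x [N [v [_ [_ ->]]]].
rewrite lee_fin.
have b0 : 0 <= complex.Re (qform (moment_matrix mu) v N).
  by rewrite ReQF; apply: Rintegral_ge0 => p _; exact: Fpos.
have [->|bne] := eqVneq (complex.Re (qform (moment_matrix mu) v N)) 0.
  by rewrite invr0 mulr0.
have bp : 0 < complex.Re (qform (moment_matrix mu) v N) by rewrite lt_def bne b0.
by rewrite ler_pdivrMr // key_up.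
Qed.

Lemma m_eq k : complex.Re (moment_matrix mu k k) = Rintegral mu setT (fun p => @ww R p ^+ k).
Proof. by apply: eq_Rintegral => p _; rewrite Re_ffkk. Qed.

Lemma key_low t k : 0 <= t -> t ^+ k * fine (mu (AA t)) <= complex.Re (moment_matrix mu k k).
Proof.
move=> t0; rewrite m_eq.
have iw : Int (fun p => @ww R p ^+ k).
  by move: (int_Re_ff hmom k k); apply: eq_integrable => // p _ /=; rewrite Re_ffkk.
rewrite -[t ^+ k]/(fine (t ^+ k)%:E) -fineM //; last exact: mu_finA hmom _ (meas_AA t).
apply: fine_le.
- by rewrite fin_numM // (mu_finA hmom _ (meas_AA t)).
- exact: integrable_fin_num.
rewrite -(integral_cst mu (meas_AA t)).
apply: (le_trans (y := \int[mu]_(x in AA t) ((@ww R x ^+ k)%:E))%E).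
  apply: ge0_le_integral.
  - exact: meas_AA.
  - by move=> p _; rewrite lee_fin exprn_ge0.
  - exact: measurable_cst.
  - exact: (measurable_funS measurableT (subsetT _) (measurable_int _ iw)).
  - move=> p; rewrite AAE => /ltW tw; rewrite lee_fin lerXn2r // ?nnegrE //.
    exact: ww_ge0.
apply: ge0_subset_integral => //.
- exact: meas_AA.
- exact: measurable_int iw.
- by move=> p _; rewrite lee_fin exprn_ge0 // ww_ge0.
Qed.

End Keys.
Section Pos.
Variable R : realType.
Variable mu : {measure set (R * R) -> \bar R}.

Lemma norm_lower (a b e : R) : `|a - b| < e -> `|a| - e < `|b|.
Proof.
move=> h; have := ler_normD (a - b) b; rewrite subrK => h2.
lra.
Qed.

Lemma exists_pos : ~ finite_set (msupport mu) ->
  exists t : R, 0 < t /\ (0 < mu (AA t))%E.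
Proof.
move=> hinf.
have [p [sp pn0]] : exists p : R * R, msupport mu p /\ p != (0, 0).
  apply: contrapT => H; apply: hinf.
  apply: (@sub_finite_set _ _ [set (0, 0)]); last exact: finite_set1.
  move=> p sp; apply: contrapT => np; apply: H; exists p; split => //.
  by apply/eqP.
set c := Num.max `|p.1| `|p.2|.
have c0 : 0 < c.
  rewrite /c lt_max !normr_gt0; move: pn0; case: p {sp c} => a b.
  by rewrite xpair_eqE negb_and.
have c20 : 0 < c / 2 by rewrite divr_gt0.
exists (c ^+ 2 / 4); split; first by rewrite divr_gt0 // exprn_gt0.
apply: (lt_le_trans (sp _ c20)).
have Eb : ball p (c / 2) = ball p.1 (c / 2) `*` ball p.2 (c / 2) by [].
apply: le_measure.
- by rewrite inE Eb; apply: measurableX; exact: measurable_ball.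
- by rewrite inE; exact: meas_AA.
move=> q; rewrite Eb => -[/= h1 h2]; rewrite AAE /ww.
move: h1 h2; rewrite -!ball_normE /ball_ /= => /norm_lower h1 /norm_lower h2.
have q1 : q.1 ^+ 2 = `|q.1| ^+ 2 by rewrite real_normK // num_real.
have q2 : q.2 ^+ 2 = `|q.2| ^+ 2 by rewrite real_normK // num_real.
rewrite q1 q2.
have n1 := normr_ge0 q.1; have n2 := normr_ge0 q.2.
have [h|h] := lerP `|p.2| `|p.1|.
  have ce : c = `|p.1| by rewrite /c max_l.
  rewrite -ce in h1; nra.
have ce : c = `|p.2| by rewrite /c max_r // ltW.
rewrite -ce in h2; nra.
Qed.

End Pos.
Section Roots.
Variable R : realType.

Lemma root_pow (x : R) n : 0 <= x -> (0 < n)%N -> (x ^+ n) `^ (n%:R^-1) = x.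
Proof.
move=> x0 n0; rewrite -powR_mulrn // -powRrM mulfV ?powRr1 //.
by rewrite pnatr_eq0 -lt0n.
Qed.

Lemma ev_root_gt (a c : R) : 0 < a -> c < 1 ->
  \forall n \near \oo, c < a `^ (n%:R^-1).
Proof.
move=> a0 c1; have [c0|c0] := lerP c 0.
  by near=> n; apply: (le_lt_trans c0); rewrite powR_gt0.
have := @cvg_expr R c; rewrite ger0_norm ?ltW // => /(_ c1).
move=> /cvgrPdist_lt /(_ a a0) ev.
near=> n.
have n0 : (0 < n)%N by near: n; exact: nbhs_infty_gt.
have hn : c ^+ n < a.
  have : `|0 - c ^+ n| < a by near: n; exact: ev.
  by rewrite sub0r normrN ger0_norm // exprn_ge0 // ltW.
rewrite -{1}(root_pow _ n (ltW c0) n0); apply: gt0_ltr_powR => //.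
- by rewrite invr_gt0 ltr0n.
- by rewrite nnegrE exprn_ge0 // ltW.
- by rewrite nnegrE ltW.
Unshelve. all: by end_near.
Qed.

Lemma ev_root_lt (a c : R) : 0 < a -> 1 < c ->
  \forall n \near \oo, a `^ (n%:R^-1) < c.
Proof.
move=> a0 c1.
have c0 : 0 < c by apply: lt_trans c1.
have d1 : `|c^-1| < 1 by rewrite ger0_norm ?invr_ge0 ?ltW // invf_lt1.
have := @cvg_expr R (c^-1) d1 => /cvgrPdist_lt /(_ (a^-1)).
rewrite invr_gt0 => /(_ a0) ev.
near=> n.
have n0 : (0 < n)%N by near: n; exact: nbhs_infty_gt.
have hn : a < c ^+ n.
  have : `|0 - c^-1 ^+ n| < a^-1 by near: n; exact: ev.
  rewrite sub0r normrN ger0_norm ?exprn_ge0 ?invr_ge0 ?ltW // exprVn => h.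
  have xp : 0 < c ^+ n by rewrite exprn_gt0.
  by move: h; rewrite ltf_pV2 // ?posrE.
rewrite -[X in _ < X](root_pow _ n (ltW c0) n0); apply: gt0_ltr_powR => //.
- by rewrite invr_gt0 ltr0n.
- by rewrite nnegrE ltW.
- by rewrite nnegrE exprn_ge0 // ltW.
Unshelve. all: by end_near.
Qed.

End Roots.
Section Final.
Variable R : realType.
Variable mu : {measure set (R * R) -> \bar R}.
Hypothesis hinf : ~ finite_set (msupport mu).
Hypothesis hmom : finite_moments mu.
Local Notation m k := (complex.Re (moment_matrix mu k k)).
Local Notation B := (beta (shift_mx (moment_matrix mu)) (moment_matrix mu)).

Lemma m_ge0 k : 0 <= m k.
Proof.
by rewrite (@m_eq R mu k); apply: Rintegral_ge0 => p _; rewrite exprn_ge0 // ww_ge0.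
Qed.

Lemma mu_fin_pos t : (0 < mu (AA t))%E -> 0 < fine (mu (AA t)).
Proof.
move=> h; have fa : mu (AA t) \is a fin_num := mu_finA hmom _ (meas_AA t).
by apply: fine_gt0; rewrite h /= ltey_eq fa.
Qed.

Lemma m_pos k : 0 < m k.
Proof.
have [t [t0 mt]] := @exists_pos R mu hinf.
apply: (lt_le_trans _ (@key_low R mu hmom t k (ltW t0))).
by rewrite mulr_gt0 ?exprn_gt0 // mu_fin_pos.
Qed.

Lemma ratio k : ((m k.+1 / m k)%:E <= B)%E.
Proof.
apply: ereal_sup_ubound; exists k.+1, (fun i => (i == k)%:R); split.
  move=> i ik; have -> : (i == k) = false.
    by apply/negbTE; move: ik; apply: contraTneq => ->; rewrite ltnn.
  by [].
split; first by exists k; rewrite eqxx oner_eq0.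
by rewrite !qform_delta.
Qed.

Lemma B_ge0 : (0 <= B)%E.
Proof.
apply: le_trans (ratio 0); rewrite lee_fin divr_ge0 //; exact: m_ge0.
Qed.

Lemma upper b : B = b%:E -> forall n, m n <= m 0 * b ^+ n.
Proof.
move=> EB; have b0 : 0 <= b by rewrite -lee_fin -EB B_ge0.
elim=> [|n IH]; first by rewrite expr0 mulr1.
have := ratio n; rewrite EB lee_fin ler_pdivrMr ?m_pos // => h.
apply: (le_trans h); rewrite exprS mulrCA.
by apply: ler_wpM2l.
Qed.

Lemma u_upper b n : B = b%:E -> (0 < n)%N ->
  m n `^ (n%:R^-1) <= m 0 `^ (n%:R^-1) * b.
Proof.
move=> EB n0; have b0 : 0 <= b by rewrite -lee_fin -EB B_ge0.
have r0 : 0 <= n%:R^-1 :> R by rewrite invr_ge0.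
have xn : m n \in Num.nneg by rewrite nnegrE m_ge0.
have yn : m 0 * b ^+ n \in Num.nneg by rewrite nnegrE mulr_ge0 ?exprn_ge0 ?m_ge0.
have h : m n `^ (n%:R^-1) <= (m 0 * b ^+ n) `^ (n%:R^-1) :=
  ge0_ler_powR r0 xn yn (upper b EB n).
apply: (le_trans h); rewrite powRM ?exprn_ge0 ?m_ge0 // (root_pow _ _ _ b0 n0) //; exact: m_ge0.
Qed.

Lemma u_lower t n : 0 <= t -> (0 < n)%N ->
  t * fine (mu (AA t)) `^ (n%:R^-1) <= m n `^ (n%:R^-1).
Proof.
move=> t0 n0.
have a0 : 0 <= fine (mu (AA t)) by rewrite fine_ge0 // measure_ge0.
have r0 : 0 <= n%:R^-1 :> R by rewrite invr_ge0.
have yn : m n \in Num.nneg by rewrite nnegrE m_ge0.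
have xn : t ^+ n * fine (mu (AA t)) \in Num.nneg by rewrite nnegrE mulr_ge0 ?exprn_ge0.
have h : (t ^+ n * fine (mu (AA t))) `^ (n%:R^-1) <= m n `^ (n%:R^-1) :=
  ge0_ler_powR r0 xn yn (@key_low R mu hmom t n t0).
by move: h; rewrite powRM ?exprn_ge0 // (root_pow _ _ _ t0 n0).
Qed.

Lemma mu_pos_of t : 0 <= t -> ~ (B <= t%:E)%E -> (0 < mu (AA t))%E.
Proof.
move=> t0 H; rewrite lt0e measure_ge0 andbT; apply/eqP => h.
by apply: H; apply: (@key_ratio R mu hmom t).
Qed.

Lemma final_cvg :
  (fun n : nat => ((m n) `^ (n%:R)^-1)%:E) @ \oo --> B.
Proof.
have := B_ge0.
case EB : (beta (shift_mx (moment_matrix mu)) (moment_matrix mu)) => [b| |] hB.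
- have b0 : 0 <= b by rewrite -lee_fin.
  apply/fine_cvgP; split; first by apply: nearW.
  apply/cvgrPdist_lt => eps e0 /=.
  have up : \forall n \near \oo, m n `^ (n%:R^-1) < b + eps.
    have b1 : 0 < b + 1 by lra.
    set e' := eps / (b + 1).
    have e'0 : 0 < e' by rewrite divr_gt0.
    have e'b : e' * (b + 1) = eps by rewrite /e' divfK // gt_eqF.
    have ev := @ev_root_lt R _ _ (m_pos 0) (_ : 1 < 1 + e').
    near=> n.
    have n0 : (0 < n)%N by near: n; exact: nbhs_infty_gt.
    have h1 := u_upper b n EB n0.
    have h2 : m 0 `^ (n%:R^-1) < 1 + e' by near: n; apply: ev; lra.
    have h3 := powR_ge0 (m 0) (n%:R^-1).
    nra.
  have lo : \forall n \near \oo, b - eps < m n `^ (n%:R^-1).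
    set t := b - eps / 2.
    have [t0|t0] := lerP t 0.
      near=> n; have := powR_ge0 (m n) (n%:R^-1); rewrite /t in t0; lra.
    have mp : (0 < mu (AA t))%E.
      apply: mu_pos_of (ltW t0) _; rewrite EB lee_fin /t => H; clear -H e0; lra.
    have a0 := mu_fin_pos t mp.
    have lt1 : (b - eps) / t < 1 by rewrite ltr_pdivrMr // mul1r /t; lra.
    have ev := @ev_root_gt R _ _ a0 lt1.
    near=> n.
    have n0 : (0 < n)%N by near: n; exact: nbhs_infty_gt.
    have h1 := u_lower t n (ltW t0) n0.
    have h2 : (b - eps) / t < fine (mu (AA t)) `^ (n%:R^-1) by near: n; exact: ev.
    have e3 : t * ((b - eps) / t) = b - eps by rewrite mulrC divfK // gt_eqF.
    apply: lt_le_trans h1; rewrite -e3 ltr_pM2l //.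
  near=> n; rewrite ltr_distlC; apply/andP; split.
    by near: n; exact: lo.
  by near: n; exact: up.
- apply/cvgeyPge => M.
  have hm : 0 <= Num.max M 0 by rewrite le_max lexx orbT.
  have hM : M <= Num.max M 0 by rewrite le_max lexx.
  set t := 2 * (Num.max M 0 + 1).
  have t0 : 0 < t by rewrite /t; lra.
  have mp : (0 < mu (AA t))%E.
    by apply: mu_pos_of (ltW t0) _; rewrite EB leNgt ltey.
  have a0 := mu_fin_pos t mp.
  have ev := @ev_root_gt R _ _ a0 (_ : 1 / 2 < 1).
  near=> n.
  have n0 : (0 < n)%N by near: n; exact: nbhs_infty_gt.
  have h1 := u_lower t n (ltW t0) n0.
  have h2 : 1 / 2 < fine (mu (AA t)) `^ (n%:R^-1) by near: n; apply: ev; lra.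
  have h4 : t * (1 / 2) < t * fine (mu (AA t)) `^ (n%:R^-1) by rewrite ltr_pM2l.
  rewrite lee_fin; rewrite /t in h4 h1; lra.
- by move: hB; rewrite leeNy_eq.
Unshelve. all: by end_near.
Qed.

End Final.

Theorem corollary5 (R : realType) (mu : {measure set (R * R) -> \bar R})
  (hinf : ~ finite_set (msupport mu)) (hmom : finite_moments mu) :
  (fun n : nat => ((complex.Re (moment_matrix mu n n)) `^ (n%:R)^-1)%:E)
    @ \oo --> beta (shift_mx (moment_matrix mu)) (moment_matrix mu).
Proof. exact: final_cvg hinf hmom. Qed.
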